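(* Let $n\ge2$, $m\ge0$, $p$, $q$ be fixed integers with $0\le p\le 2n-4$, $0\le q\le 2n-3$, $p+q\le 2n-3$. Then there is a polynomial $\alpha_{p,q}(j)$ in $j$ of degree at most $2(2n-3-p-q)+q-1$ (the zero polynomial if this number is negative) such that for every integer $j$ with $1\le j\le n-1$, the coefficient of $x^pz^q$ in $$(2x+m+z+1)_{j-1}\,(x+2z-j+2)_{j-1}\,(x+m+2j-z+2)_{2n-2j-2}\,(m+3j-3z)$$ equals $2^j\alpha_{p,q}(j)$.
   Context: $(a)_k:=a(a+1)\cdots(a+k-1)$ for $k\ge1$, $(a)_0:=1$; here $x,z$ are indeterminates. *)

(* Defs.v *)
From mathcomp Require Import all_boot all_order all_algebra.
Set Implicit Arguments. Unset Strict Implicit. Unset Printing Implicit Defensive.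
Import GRing.Theory.
Local Open Scope ring_scope.

Definition poch (R : nzRingType) (a : R) (k : nat) : R :=
  \prod_(i < k) (a + i%:R).

(* Bivariate polynomials in x, z over rat: {poly {poly rat}}, outer variable x,
   inner variable z.  The coefficient of x^p z^q of P is (P`_p)`_q. *)
Definition bvX : {poly {poly rat}} := 'X.
Definition bvZ : {poly {poly rat}} := ('X)%:P.
Definition bvC (r : rat) : {poly {poly rat}} := r%:P%:P.

Definition coefxz (P : {poly {poly rat}}) (p q : nat) : rat := (P`_p)`_q.

Definition prodA10 (n m j : nat) : {poly {poly rat}} :=
  poch (bvX *+ 2 + bvC m%:R + bvZ + 1) (j - 1)
  * poch (bvX + bvZ *+ 2 - bvC j%:R + bvC 2) (j - 1)
  * poch (bvX + bvC m%:R + bvC (2 * j)%:R - bvZ + bvC 2) (2 * n - 2 * j - 2)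
  * (bvC m%:R + bvC (3 * j)%:R - bvZ *+ 3).

(* Main.v *)
Require Import Defs.
From mathcomp Require Import all_boot all_order all_algebra.
From mathcomp Require Import ring lra zify.
Set Warnings "-notation-overridden -ambiguous-paths -deprecated".
Import GRing.Theory Num.Theory.
Local Open Scope ring_scope.

Definition lin (t : rat * rat * rat) : {poly {poly rat}} :=
  bvX * bvC t.1.1 + bvZ * bvC t.1.2 + bvC t.2.

Lemma coef_lin_mul t P p q :
  coefxz (lin t * P) p q =
  t.1.1 * (if p is p'.+1 then coefxz P p' q else 0)
  + t.1.2 * (if q is q'.+1 then coefxz P p q' else 0)
  + t.2 * coefxz P p q.
Proof.
rewrite /coefxz /lin /bvX /bvZ /bvC !mulrDl !coefD -!mulrA !coefXM !coefCM.
rewrite coefXM coefCM.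
by case: p => [|p]; case: q => [|q] /=; rewrite ?coef0 ?mulr0 ?coefCM.
Qed.

Lemma coefxz1 p q : coefxz 1 p q = ((p == 0%N) && (q == 0%N))%:R.
Proof.
rewrite /coefxz coef1; case: p => [|p] /=; rewrite ?coef1 ?coef0 //.
Qed.

Lemma deg_bound (r : seq (rat*rat*rat)) p q : (size r < p + q)%N ->
  coefxz (\prod_(t <- r) lin t) p q = 0.
Proof.
elim: r p q => [|t r IH] p q /=.
  move=> H; rewrite big_nil coefxz1; case: p q H => [|p] [|q] //.
move=> H; rewrite big_cons coef_lin_mul.
rewrite IH; last lia.
case: p H => [|p] H; case: q H => [|q] H /=; rewrite ?IH; (try lia); by rewrite ?mulr0 ?addr0.
Qed.

Definition hsw (t : rat * rat * rat) : rat * rat * rat := (t.2, t.1.2, t.1.1).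

Lemma deg_bound_h (r : seq (rat*rat*rat)) p q : (size r < p + q)%N ->
  coefxz (\prod_(t <- r) lin (hsw t)) p q = 0.
Proof.
move=> H; rewrite -(big_map hsw xpredT lin); apply: deg_bound; by rewrite size_map.
Qed.

Lemma link (r : seq (rat*rat*rat)) p q :
  coefxz (\prod_(t <- r) lin t) p q =
  if (p + q <= size r)%N then coefxz (\prod_(t <- r) lin (hsw t)) (size r - p - q) q else 0.
Proof.
case: ifP => H; last by apply: deg_bound; lia.
elim: r p q H => [|t r IH] p q /= H.
  rewrite !big_nil !coefxz1; case: p q H => [|p] [|q] //.
rewrite !big_cons !coef_lin_mul /=.
have E: forall p' q', (p' + q' <= size r)%N ->
   coefxz (\prod_(t <- r) lin t) p' q' = coefxz (\prod_(t <- r) lin (hsw t)) (size r - p' - q') q'.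
  by move=> p' q' H'; apply: IH.
have [e He] : {e | e = ((size r).+1 - p - q)%N} by exists ((size r).+1 - p - q)%N.
rewrite -He.
have T1 : (if p is p'.+1 then coefxz (\prod_(t <- r) lin t) p' q else 0)
          = coefxz (\prod_(t <- r) lin (hsw t)) e q.
  clear -E H He; case: p H He => [|p] H He.
    by rewrite deg_bound_h //; lia.
  by rewrite E; [congr coefxz; lia | lia].
have T2 : (if q is q'.+1 then coefxz (\prod_(t <- r) lin t) p q' else 0)
          = (if q is q'.+1 then coefxz (\prod_(t <- r) lin (hsw t)) e q' else 0).
  clear -E H He; case: q H He => [|q] H He //.
  by rewrite E; [congr coefxz; lia | lia].
have T3 : coefxz (\prod_(t <- r) lin t) p q
          = (if e is e'.+1 then coefxz (\prod_(t <- r) lin (hsw t)) e' q else 0).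
  clear -E H He; case: e He => [|e'] He.
    by apply: deg_bound; lia.
  by rewrite E; [congr coefxz; lia | lia].
rewrite T1 T2 T3 /=.
set a := t.1.1 * _; set b := t.1.2 * _; set c := t.2 * _; ring.
Qed.

Lemma sum_ind n (j : nat) (f : nat -> nat) :
  \sum_(i < n) (((j == i :> nat)%:R : rat) *+ f i) = if (j < n)%N then (f j)%:R else 0.
Proof.
case: ltnP => h.
  rewrite (bigD1 (Ordinal h)) //= eqxx big1 ?addr0 // => i Hi.
  have -> : (j == i) = false.
    apply/negbTE; apply: (contraNneq _ Hi) => E; apply/eqP/val_inj => /=; by rewrite -E.
  by rewrite mul0rn.
rewrite big1 // => i _; have -> : (j == i) = false by apply/negbTE; have := ltn_ord i; lia.
by rewrite mul0rn.
Qed.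

Lemma coefQ k j : (('X + 1)^+(k.+1) - 'X^(k.+1) : {poly rat})`_j
   = if (j <= k)%N then ('C(k.+1, j))%:R else 0.
Proof.
rewrite coefB exprD1n coef_sum coefXn.
under eq_bigr do rewrite coefMn coefXn.
rewrite sum_ind.
case: (ltngtP j k.+1) => h.
- have -> : (j <= k)%N by lia. have -> : (j < k.+2)%N by lia. by rewrite subr0.
- have -> : (j <= k)%N = false by lia. have -> : (j < k.+2)%N = false by lia. by rewrite subr0.
- subst j. by rewrite ltnSn binn ltnn /= subrr.
Qed.

Lemma antider (k : nat) (g : {poly rat}) : (size g <= k)%N ->
  exists G : {poly rat}, (size G <= k.+1)%N /\ forall x, G.[x+1] - G.[x] = g.[x].
Proof.
elim: k g => [|k IH] g Hg.
  move: Hg; rewrite leqn0 size_poly_eq0 => /eqP ->.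
  by exists 0; rewrite size_poly0; split => // x; rewrite !horner0 subrr.
set c := g`_k.
set D := (c / (k.+1)%:R) *: (('X + 1)^+(k.+1) - 'X^(k.+1) : {poly rat}).
have HD : (size (g - D)%R <= k)%N.
  apply/leq_sizeP => i Hi; rewrite coefB coefZ coefQ.
  case: (ltngtP i k) => h; first lia.
    have /leq_sizeP Hz := Hg; rewrite mulr0 subr0 Hz //; lia.
  subst i; rewrite binSn /c; field; by rewrite addrC natr1 pnatr_eq0.
have [G' [HG' EG']] := IH _ HD.
exists (G' + (c / (k.+1)%:R) *: 'X^(k.+1)); split.
  apply: leq_trans (size_add _ _) _; rewrite geq_max; apply/andP; split; first lia.
  by apply: leq_trans (size_scale_leq _ _) _; rewrite size_polyXn.
move=> x.
have := EG' x; rewrite /D !hornerE => E.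
transitivity ((G'.[x+1] - G'.[x]) + c / k.+1%:R * ((x + 1) ^+ k.+1 - x ^+ k.+1)); first ring.
rewrite E; ring.
Qed.

Lemma recur (a : rat) (k : nat) (u : nat -> rat) (g : {poly rat}) :
  (size g <= k)%N -> (forall L, u L.+1 = a * u L + a^+(L.+1) * g.[L%:R]) ->
  exists f : {poly rat}, (size f <= k.+1)%N /\ forall L, u L = a^+L * f.[L%:R].
Proof.
move=> Hs Hu; have [G [HG EG]] := antider _ _ Hs.
exists (G + (u 0%N - G.[0])%:P); split.
  apply: leq_trans (size_add _ _) _; rewrite geq_max HG /=.
  by apply: leq_trans (size_polyC_leq1 _) _.
elim=> [|L IH].
  rewrite expr0 mul1r hornerD hornerC; ring.
rewrite Hu IH -natr1 !hornerD !hornerC -EG exprS; ring.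
Qed.

Definition Bk (a b c s : rat) (L : nat) : {poly {poly rat}} :=
  \prod_(i < L) lin (hsw (a, b, c + s * i%:R)).

Lemma Bk_rec a b c s L e q : coefxz (Bk a b c s L.+1) e q =
  (c + s * L%:R) * (if e is e'.+1 then coefxz (Bk a b c s L) e' q else 0)
  + b * (if q is q'.+1 then coefxz (Bk a b c s L) e q' else 0)
  + a * coefxz (Bk a b c s L) e q.
Proof. by rewrite /Bk big_ord_recr /= mulrC coef_lin_mul. Qed.

Lemma block_step a b c s e q (F1 F2 : {poly rat}) : a != 0 ->
 (size F1 <= 2*e+q)%N -> (size F2 <= (2*e+q).-1)%N ->
 (forall L, (if q is q'.+1 then coefxz (Bk a b c s L) e q' else 0) = a^+L * F1.[L%:R]) ->
 (forall L, (if e is e'.+1 then coefxz (Bk a b c s L) e' q else 0) = a^+L * F2.[L%:R]) ->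
 exists f : {poly rat}, (size f <= (2*e+q).+1)%N /\
    forall L, coefxz (Bk a b c s L) e q = a^+L * f.[L%:R].
Proof.
move=> a0 H1 H2 E1 E2.
apply: (recur a (2*e+q) (fun L => coefxz (Bk a b c s L) e q) (a^-1 *: (b *: F1 + (c%:P + s *: 'X) * F2))).
  apply: leq_trans (size_scale_leq _ _) _.
  apply: leq_trans (size_add _ _) _; rewrite geq_max; apply/andP; split.
    by apply: leq_trans (size_scale_leq _ _) _.
  have [->|nz] := eqVneq F2 0; first by rewrite mulr0 size_poly0.
  apply: leq_trans (size_polyMleq _ _) _.
  have : (size (c%:P + s *: 'X : {poly rat})%R <= 2)%N.
    apply: leq_trans (size_add _ _) _; rewrite geq_max; apply/andP; split.
      by apply: leq_trans (size_polyC_leq1 _) _.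
    by apply: leq_trans (size_scale_leq _ _) _; rewrite size_polyX.
  have : (0 < size F2)%N by rewrite size_poly_gt0.
  lia.
move=> L; rewrite Bk_rec E1 E2 !(hornerZ, hornerD, hornerM, hornerC, hornerX) exprS.
by field.
Qed.

Lemma block a b c s : a != 0 -> forall e q, exists f : {poly rat},
  (size f <= (2*e+q).+1)%N /\ forall L, coefxz (Bk a b c s L) e q = a^+L * f.[L%:R].
Proof.
move=> a0; elim=> [|e IHe] q; elim: q => [|q IHq].
- apply: (@block_step a b c s _ _ 0 0 a0).
  + by rewrite size_poly0.
  + by rewrite size_poly0.
  + by move=> L; rewrite horner0 mulr0.
  + by move=> L; rewrite horner0 mulr0.
- have [F1 [H1 E1]] := IHq.
  apply: (@block_step a b c s _ _ F1 0 a0).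
  + lia.
  + by rewrite size_poly0.
  + exact: E1.
  + by move=> L; rewrite horner0 mulr0.
- have [F2 [H2 E2]] := IHe 0%N.
  apply: (@block_step a b c s _ _ 0 F2 a0).
  + by rewrite size_poly0.
  + lia.
  + by move=> L; rewrite horner0 mulr0.
  + exact: E2.
- have [F1 [H1 E1]] := IHq. have [F2 [H2 E2]] := IHe q.+1.
  apply: (@block_step a b c s _ _ F1 F2 a0) => //; lia.
Qed.

Section Pol.
Variable R : pred nat.

Definition PolW (w : nat -> rat) (d : nat) (v : nat -> rat) :=
  exists f : {poly rat}, (size f <= d)%N /\ forall j, R j -> v j = w j * f.[j%:R].

Lemma PolW_weaken w d d' v : (d <= d')%N -> PolW w d v -> PolW w d' v.
Proof. by move=> h [f [Hs E]]; exists f; split => //; apply: leq_trans h. Qed.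

Lemma PolW_ext w d v v' : (forall j, R j -> v j = v' j) -> PolW w d v -> PolW w d v'.
Proof. by move=> h [f [Hs E]]; exists f; split => // j Rj; rewrite -h // E. Qed.

Lemma PolW_add w d v1 v2 : PolW w d v1 -> PolW w d v2 -> PolW w d (fun j => v1 j + v2 j).
Proof.
move=> [f1 [H1 E1]] [f2 [H2 E2]]; exists (f1 + f2); split.
  by apply: leq_trans (size_add _ _) _; rewrite geq_max H1 H2.
by move=> j Rj; rewrite E1 // E2 // hornerD mulrDr.
Qed.

Lemma PolW_0 w d : PolW w d (fun _ => 0).
Proof. by exists 0; split; [rewrite size_poly0 | move=> j _; rewrite horner0 mulr0]. Qed.

Lemma PolW_sum w d n (v : 'I_n -> nat -> rat) :
  (forall i, PolW w d (v i)) -> PolW w d (fun j => \sum_(i < n) v i j).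
Proof.
elim: n v => [|n IH] v Hv.
  by exists 0; split; [rewrite size_poly0 | move=> j _; rewrite big_ord0 horner0 mulr0].
have := @PolW_add w d _ _ (IH (fun i => v (widen_ord (leqnSn n) i)) (fun i => Hv _)) (Hv ord_max).
by move=> [f [Hs E]]; exists f; split => // j Rj; rewrite big_ord_recr /= E.
Qed.

Lemma PolW_mul w1 w2 d1 d2 v1 v2 : PolW w1 d1 v1 -> PolW w2 d2 v2 ->
  PolW (fun j => w1 j * w2 j) (d1 + d2).-1 (fun j => v1 j * v2 j).
Proof.
move=> [f1 [H1 E1]] [f2 [H2 E2]]; exists (f1 * f2); split.
  apply: leq_trans (size_polyMleq _ _) _; lia.
by move=> j Rj; rewrite E1 // E2 // hornerM; ring.
Qed.

Definition Fam (w : nat -> rat) (k : nat) (H : nat -> {poly {poly rat}}) :=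
  forall e q, PolW w (2*e+q+k) (fun j => coefxz (H j) e q).

Lemma coefxzM A B e q : coefxz (A*B) e q =
  \sum_(i < e.+1) \sum_(k < q.+1) coefxz A i k * coefxz B (e - i)%N (q - k)%N.
Proof.
rewrite /coefxz coefM coef_sum; apply: eq_bigr => i _; by rewrite coefM.
Qed.

Lemma Fam_mul w1 w2 k1 k2 H1 H2 : Fam w1 k1 H1 -> Fam w2 k2 H2 ->
  Fam (fun j => w1 j * w2 j) (k1 + k2).-1 (fun j => H1 j * H2 j).
Proof.
move=> F1 F2 e q.
apply: (@PolW_ext _ _ (fun j =>
  \sum_(i < e.+1) \sum_(k < q.+1) coefxz (H1 j) i k * coefxz (H2 j) (e - i)%N (q - k)%N)).
  by move=> j _; rewrite coefxzM.
apply: PolW_sum => i; apply: PolW_sum => k.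
apply: (@PolW_weaken _ _ _ _ _ (@PolW_mul _ _ _ _ _ _ (F1 i k) (F2 (e - i)%N (q - k)%N))).
have := ltn_ord i; have := ltn_ord k; lia.
Qed.

End Pol.

Lemma comp_lin (f : {poly rat}) (a0 a1 : rat) :
  (size (f \Po (a0%:P + a1 *: 'X)) <= maxn 1 (size f))%N /\
  forall x, (f \Po (a0%:P + a1 *: 'X)).[x] = f.[a0 + a1 * x].
Proof.
split; last by move=> x; rewrite horner_comp hornerD hornerC hornerZ hornerX.
apply: leq_trans (size_comp_poly_leq _ _) _.
have : (size (a0%:P + a1 *: 'X : {poly rat})%R <= 2)%N.
  apply: leq_trans (size_add _ _) _; rewrite geq_max; apply/andP; split.
    by apply: leq_trans (size_polyC_leq1 _) _.
  by apply: leq_trans (size_scale_leq _ _) _; rewrite size_polyX.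
move: (size (a0%:P + a1 *: 'X)) (size f) => a b h.
have : ((b.-1 * a.-1) <= b.-1)%N by rewrite -{2}(muln1 b.-1); apply: leq_mul => //; lia.
lia.
Qed.

Lemma Fam_block (Rj : pred nat) a b c s (a0 a1 : rat) (Lf : nat -> nat) :
  a != 0 -> (forall j, Rj j -> (Lf j)%:R = a0 + a1 * j%:R) ->
  Fam Rj (fun j => a ^+ (Lf j)) 1 (fun j => Bk a b c s (Lf j)).
Proof.
move=> an0 HL e q.
have [f [Hs E]] := block a b c s an0 e q.
have [Hs' E'] := comp_lin f a0 a1.
exists (f \Po (a0%:P + a1 *: 'X)); split.
  apply: leq_trans Hs' _; rewrite geq_max; apply/andP; split; lia.
by move=> j Rj'; rewrite E E' HL.
Qed.

Lemma Fam_last (Rj : pred nat) (m : nat) :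
  Fam Rj (fun _ => 1) 0 (fun j => lin (hsw (0, -3%:R, m%:R + (3*j)%:R))).
Proof.
move=> e q.
exists (((e == 1%N) && (q == 0%N))%:R *: (m%:R%:P + 3%:R *: 'X)
        + ((e == 0%N) && (q == 1%N))%:R *: (-3%:R)%:P); split.
  case: e => [|[|e]]; case: q => [|[|q]] /=; rewrite ?scale0r ?scale1r ?addr0 ?add0r ?size_poly0 //;
   try (by apply: leq_trans (size_polyC_leq1 _) _);
   apply: leq_trans (size_add _ _) _; rewrite geq_max; apply/andP; split;
   try (by apply: leq_trans (size_polyC_leq1 _) _);
   by apply: leq_trans (size_scale_leq _ _) _; rewrite size_polyX.
move=> j _; rewrite -[lin _]mulr1 coef_lin_mul /= !coefxz1.
case: e => [|[|e]]; case: q => [|[|q]] /=;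
  rewrite !(hornerD, hornerZ, hornerC, hornerX) natrM ?coefxz1 /=; ring.
Qed.

Definition t1 (m : nat) (i : nat) : rat * rat * rat := (2%:R, 1, m%:R + 1 + i%:R).
Definition t2 (j : nat) (i : nat) : rat * rat * rat := (1, 2%:R, 2%:R - j%:R + i%:R).
Definition t3 (m j : nat) (i : nat) : rat * rat * rat := (1, -1, m%:R + (2*j)%:R + 2%:R + i%:R).
Definition t4 (m j : nat) : rat * rat * rat := (0, -3%:R, m%:R + (3*j)%:R).
Definition rall (n m j : nat) :=
  map (t1 m) (iota 0 (j-1)) ++ map (t2 j) (iota 0 (j-1))
  ++ map (t3 m j) (iota 0 (2*n-2*j-2)) ++ [:: t4 m j].

Lemma iota_ord (F : nat -> {poly {poly rat}}) L :
  \prod_(i <- iota 0 L) F i = \prod_(i < L) F i.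
Proof. by rewrite -(big_mkord xpredT) /index_iota subn0. Qed.

Lemma bvC_simp (x y : rat) : bvC (x + y) = bvC x + bvC y.
Proof. by rewrite /bvC !rmorphD. Qed.
Lemma bvC_opp (x : rat) : bvC (- x) = - bvC x.
Proof. by rewrite /bvC !rmorphN. Qed.
Lemma bvC_nat (k : nat) : bvC k%:R = k%:R.
Proof. by rewrite /bvC !rmorph_nat. Qed.
Lemma bvC1 : bvC 1 = 1.
Proof. by rewrite /bvC !rmorph1. Qed.
Lemma bvC0 : bvC 0 = 0.
Proof. by rewrite /bvC !rmorph0. Qed.

Lemma prodA10_lin n m j : prodA10 n m j = \prod_(t <- rall n m j) lin t.
Proof.
rewrite /rall !big_cat /= !big_map big_cons big_nil mulr1 !iota_ord /prodA10 /poch !mulrA.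
congr (_ * _ * _ * _).
- apply: eq_bigr => i _; rewrite /lin /t1 /= !(bvC_simp, bvC_nat, bvC1); ring.
- apply: eq_bigr => i _; rewrite /lin /t2 /= !(bvC_simp, bvC_opp, bvC_nat, bvC1); ring.
- apply: eq_bigr => i _; rewrite /lin /t3 /= !(bvC_simp, bvC_opp, bvC_nat, bvC1); ring.
- rewrite /lin /t4 /= !(bvC_simp, bvC_opp, bvC_nat, bvC1, bvC0); ring.
Qed.

Lemma cast_eq (a b c : nat) : (a + b = c)%N -> (a%:R : rat) = c%:R - b%:R.
Proof. by move=> <-; rewrite natrD; ring. Qed.

Lemma hom_split n m j : (1 <= j <= n - 1)%N ->
  \prod_(t <- rall n m j) lin (hsw t) =
  Bk 2%:R 1 (m%:R + 1) 1 (j-1) * (Bk 1 2%:R 0 (-1) (j-1) *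
  (Bk 1 (-1) (m%:R + (2*n)%:R - 1) (-1) (2*n-2*j-2) * lin (hsw (t4 m j)))).
Proof.
move=> /andP [Hj1 Hj2].
rewrite /rall !big_cat /= !big_map big_cons big_nil mulr1 !iota_ord.
congr (_ * (_ * (_ * _))).
- by apply: eq_bigr => i _; rewrite /t1 mul1r.
- rewrite /Bk -(big_mkord xpredT (fun i => lin (hsw (t2 j i)))) big_rev_mkord subn0.
  apply: eq_bigr => i _; rewrite /t2.
  have Hi := ltn_ord i.
  have E : ((j - 1 - i.+1)%:R : rat) = j%:R - (i + 2)%:R by apply: cast_eq; lia.
  by rewrite E natrD add0r; congr (lin (hsw (_, _, _))); ring.
- rewrite /Bk -(big_mkord xpredT (fun i => lin (hsw (t3 m j i)))) big_rev_mkord subn0.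
  apply: eq_bigr => i _; rewrite /t3.
  have Hi := ltn_ord i.
  have E : ((2 * n - 2 * j - 2 - i.+1)%:R : rat) = (2 * n)%:R - (2 * j + i + 3)%:R by apply: cast_eq; lia.
  by rewrite E !natrD; congr (lin (hsw (_, _, _))); ring.
Qed.

Theorem lemmaA10 (n m p q : nat) :
  (2 <= n)%N -> (p <= 2 * n - 4)%N -> (q <= 2 * n - 3)%N -> (p + q <= 2 * n - 3)%N ->
  exists alpha : {poly rat},
    (size alpha <= 2 * (2 * n - 3 - p - q) + q)%N /\
    forall j : nat, (1 <= j <= n - 1)%N ->
      coefxz (prodA10 n m j) p q = 2%:R ^+ j * alpha.[j%:R].
Proof.
move=> Hn Hp Hq Hpq.
pose Rj := (fun j => (1 <= j <= n - 1)%N).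
have F1 := @Fam_block Rj 2%:R 1 (m%:R + 1) 1 (-1) 1 (fun j => j - 1)%N.
have F2 := @Fam_block Rj 1 2%:R 0 (-1) (-1) 1 (fun j => j - 1)%N.
have F3 := @Fam_block Rj 1 (-1) (m%:R + (2*n)%:R - 1) (-1) ((2*n-2)%:R) (-2%:R) (fun j => 2*n-2*j-2)%N.
have F4 := Fam_last Rj m.
have HL1 : forall j, Rj j -> ((j - 1)%N%:R : rat) = -1 + 1 * j%:R.
  move=> j /andP [h1 h2]; rewrite natrB //; ring.
have HL3 : forall j, Rj j -> ((2*n-2*j-2)%N%:R : rat) = (2*n-2)%:R + -2%:R * j%:R.
  move=> j /andP [h1 h2].
  have E : ((2*n-2*j-2)%:R : rat) = (2*n)%:R - (2*j+2)%:R by apply: cast_eq; lia.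
  have E2 : ((2*n-2)%:R : rat) = (2*n)%:R - 2%:R by apply: cast_eq; lia.
  rewrite E E2 natrD natrM; ring.
have two0 : (2%:R : rat) != 0 by rewrite pnatr_eq0.
have FF := @Fam_mul Rj _ _ _ _ _ _ (F1 two0 HL1) (@Fam_mul Rj _ _ _ _ _ _ (F2 (oner_neq0 _) HL1) (@Fam_mul Rj _ _ _ _ _ _ (F3 (oner_neq0 _) HL3) F4)).
have [f [Hs Ef]] := FF (2*n-3-p-q)%N q.
exists (2%:R^-1 *: f); split.
  apply: leq_trans (size_scale_leq _ _) _; move: Hs; rewrite /=; lia.
move=> j Hj.
rewrite prodA10_lin link.
have Hsz : size (rall n m j) = (2 * n - 3)%N.
  rewrite /rall !size_cat !size_map !size_iota /=; move: Hj; lia.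
rewrite Hsz Hpq hom_split // Ef // hornerZ !expr1n.
have Ej : (2%:R : rat) ^+ j = 2%:R * 2%:R ^+ (j-1).
  rewrite -exprS; congr (_ ^+ _); move: Hj; lia.
by rewrite Ej; field.
Qed.
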